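(* Let $r\ge 1$ be an integer, let $A$ be a finite alphabet, and let $f_0,\ldots,f_{r-1}$ be morphisms of $A^*$. If an infinite word $\mathbf{w}$ over $A$ is an alternating fixed point of $(f_0,\ldots,f_{r-1})$, then $\mathbf{w}$ is a fixed point of some $r$-block substitution $g:A^r\to A^*$.
   Context: An infinite word $\mathbf{w}=w_0w_1w_2\cdots$ over $A$ is an alternating fixed point of $(f_0,\ldots,f_{r-1})$ if $\mathbf{w}=f_0(w_0)f_1(w_1)\cdots f_{r-1}(w_{r-1})f_0(w_r)\cdots f_{i\bmod r}(w_i)\cdots$. An $r$-block substitution is a map $g:A^r\to A^*$; it acts on a word $w_0\cdots w_{rn-1}$ by $g(w_0\cdots w_{r-1})g(w_r\cdots w_{2r-1})\cdots g(w_{r(n-1)}\cdots w_{rn-1})$ (a suffix of length less than $r$ is ignored). An infinite word $\mathbf{w}=w_0w_1\cdots$ is a fixed point of $g$ if $\mathbf{w}=g(w_0\cdots w_{r-1})g(w_r\cdots w_{2r-1})\cdots$. *)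

(* Defs.v *)
From mathcomp Require Import all_boot.
Set Implicit Arguments. Unset Strict Implicit. Unset Printing Implicit Defensive.

Definition infword (A : Type) := nat -> A.

(* A morphism of A^* is given by the images of the letters: f : A -> seq A,
   acting on words by concatenation. *)
Definition morphism (A : Type) := A -> seq A.

(* w equals the infinite concatenation u 0 ++ u 1 ++ u 2 ++ ... :
   every finite partial concatenation is a prefix of w, and the lengths of
   the partial concatenations are unbounded (so the concatenation is infinite). *)
Definition is_concat (A : Type) (w : infword A) (u : nat -> seq A) : Prop :=
  (forall n i, i < size (flatten (mkseq u n)) ->
     nth (w 0) (flatten (mkseq u n)) i = w i) /\
  (forall N, exists n, N <= size (flatten (mkseq u n))).

Definition alternating_fixed_point (A : Type) (r : nat) (f : nat -> morphism A)
    (w : infword A) : Prop :=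
  is_concat w (fun i => f (i %% r) (w i)).

Definition block (A : Type) (r : nat) (w : infword A) (n : nat) : r.-tuple A :=
  [tuple w (r * n + i) | i < r].

Definition block_fixed_point (A : Type) (r : nat) (g : r.-tuple A -> seq A)
    (w : infword A) : Prop :=
  is_concat w (fun n => g (block r w n)).

(* Main.v *)
Require Import Defs.
From mathcomp Require Import all_boot.

Lemma mkseqD (T : Type) (u : nat -> T) a b :
  mkseq u (a + b) = mkseq u a ++ mkseq (fun i => u (a + i)) b.
Proof.
rewrite /mkseq iotaD map_cat; congr (_ ++ _).
by rewrite -[a in iota a]addn0 iotaDl -map_comp.
Qed.

Lemma size_flatten_mono (T : Type) (u : nat -> seq T) a b :
  a <= b -> size (flatten (mkseq u a)) <= size (flatten (mkseq u b)).
Proof.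
move=> /subnKC <-; rewrite mkseqD flatten_cat size_cat; exact: leq_addr.
Qed.

Theorem mainTheorem1 (A : finType) (r : nat) (f : nat -> morphism A)
    (w : infword A) :
  1 <= r -> alternating_fixed_point r f w ->
  exists g : r.-tuple A -> seq A, block_fixed_point g w.
Proof.
move=> r1 [H1 H2].
set u := fun i => f (i %% r) (w i).
exists (fun t : r.-tuple A => flatten (mkseq (fun i => f i (nth (w 0) t i)) r)).
have key : forall n, flatten (mkseq
   (fun k => flatten (mkseq (fun i => f i (nth (w 0) (block r w k) i)) r)) n)
   = flatten (mkseq u (r * n)).
  elim=> [|n IH]; first by rewrite muln0.
  rewrite -addn1 mkseqD flatten_cat IH mulnDr muln1 mkseqD flatten_cat.
  congr (_ ++ _); rewrite /= cats0 /mkseq; congr flatten.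
  apply/eq_in_map => i; rewrite mem_iota add0n => /andP [_ ir].
  rewrite /u addn0 [r * n]mulnC modnMDl modn_small //.
  rewrite (nth_map (Ordinal ir)) ?size_enum_ord //.
  by rewrite nth_enum_ord.
split.
  by move=> n i; rewrite key; apply: H1.
move=> N; have [n Hn] := H2 N; exists n; rewrite key.
apply: (leq_trans Hn); apply: size_flatten_mono.
by rewrite leq_pmull.
Qed.
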